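(* Let $k\ge 2$ and let $G=K_{n_1,n_2,\ldots,n_k}$ be the complete $k$-partite graph with part sizes $n_1,\dots,n_k$, where $n_i\ge 2$ for every $1\le i\le k$. Then $$\mathcal{R}(G)=\sum_{i=1}^k n_i\left(\frac{n_i-1}{n_i}+\sum_{\substack{t=1\\ t\neq i}}^k n_t\right)^{-1}\left(\frac{n_i-1}{2n_i}+\sum_{\substack{t=1\\ t\neq i}}^k\frac{n_t}{n_i+n_t}\right).$$
   Context: All graphs are finite, simple and connected, with at least two vertices; $d(u,v)$ denotes the shortest-path distance. $V_p$ denotes the set of all unordered pairs $(u,v)$ of distinct vertices. A vertex $x$ resolves the pair $(u,v)$ if $d(x,u)\neq d(x,v)$. For $(u,v)\in V_p$, $R(u,v)$ is the set of all vertices resolving $(u,v)$ (it always contains $u$ and $v$). The resolving share of a vertex $w$ for $(u,v)$ is $r_w(u,v)=\frac{1}{|R(u,v)|}$ if $w$ resolves $u$ and $v$, and $r_w(u,v)=0$ otherwise. For a vertex $w$, $R(w)$ is the set of pairs in $V_p$ resolved by $w$. The average resolving share of $w$ is $ar_w(G)=\frac{1}{|R(w)|}\sum_{(u,v)\in R(w)} r_w(u,v)$, and the resolving topological index of $G$ is $\mathcal{R}(G)=\sum_{w\in V(G)} ar_w(G)$. *)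

(* Defs.v *)
From HB Require Import structures.
From mathcomp Require Import all_boot all_order all_algebra.
Set Implicit Arguments. Unset Strict Implicit. Unset Printing Implicit Defensive.
Import Order.TTheory GRing.Theory Num.Theory.

(* A simple graph on a finite vertex type T is given by an adjacency
   relation e : rel T (assumed symmetric and irreflexive where relevant). *)
Section Resolving.
Variables (T : finType) (e : rel T).

Fixpoint walkn (n : nat) (u v : T) : bool :=
  if n is m.+1 then [exists w, e u w && walkn m w v] else u == v.

(* shortest-path distance: least n with a walk of length n (a shortest
   walk in a connected graph has length < #|T|); value #|T| if unreachable *)
Definition gdist (u v : T) : nat := find (fun n => walkn n u v) (iota 0 #|T|).

Definition Vp : {set {set T}} := [set P : {set T} | #|P| == 2].

Definition resolves (x : T) (P : {set T}) : bool :=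
  [exists u in P, exists v in P, gdist x u != gdist x v].

Definition Rpair (P : {set T}) : {set T} := [set x | resolves x P].

Definition Rvert (w : T) : {set {set T}} := [set P in Vp | resolves w P].

Local Open Scope ring_scope.

Definition rshare (w : T) (P : {set T}) : rat :=
  if resolves w P then (#|Rpair P|%:R)^-1 else 0.

Definition avg_rshare (w : T) : rat :=
  (#|Rvert w|%:R)^-1 * \sum_(P in Rvert w) rshare w P.

Definition RTI : rat := \sum_(w : T) avg_rshare w.

End Resolving.

(* complete k-partite graph K_{n_1,...,n_k}: vertex (i, j) is the j-th
   vertex of part i; two vertices are adjacent iff they lie in different parts *)
Definition kpart_vertex (k : nat) (n : 'I_k -> nat) : finType :=
  {i : 'I_k & 'I_(n i)}.

Definition kpart_adj (k : nat) (n : 'I_k -> nat) : rel (kpart_vertex n) :=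
  fun x y => tag x != tag y.
Arguments kpart_adj {k} n.

(* Main.v *)
Require Import Defs.
From mathcomp Require Import all_boot all_order all_algebra.
From mathcomp Require Import ring lra.
Set Implicit Arguments. Unset Strict Implicit. Unset Printing Implicit Defensive.
Import Order.TTheory GRing.Theory Num.Theory.
Local Open Scope ring_scope.

Section KP.
Variables (k : nat) (n : 'I_k -> nat).
Hypothesis hk : (2 <= k)%N.
Hypothesis hn : forall i, (2 <= n i)%N.
Local Notation T := (kpart_vertex n).
Local Notation e := (kpart_adj n).

Lemma sig_sum (h : 'I_k -> rat) :
  \sum_(x : T) h (tag x) = \sum_(i < k) (n i)%:R * h i.
Proof.
rewrite (partition_big (fun x : T => tag x) predT) //=.
apply: eq_bigr => i _.
have := big_tag (op := +%R) (idx := 0) (T_ := fun i => 'I_(n i)) (fun _ _ => h i) i.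
rewrite sumr_const card_ord => E.
rewrite mulr_natl E; apply: eq_big => [x|x /eqP Hx]; first by [].
by rewrite (untagE _ _ Hx) Hx.
Qed.

Lemma other_part (i : 'I_k) : exists j : 'I_k, j != i.
Proof.
have h0 : (0 < k)%N by apply: leq_trans hk.
have h1 : (1 < k)%N by [].
case: (eqVneq i (Ordinal h0)) => [->|H]; last by exists (Ordinal h0); rewrite eq_sym.
by exists (Ordinal h1).
Qed.

Definition gd (u v : T) : nat := if u == v then 0 else if tag u == tag v then 2 else 1.

Lemma card3 : (3 <= #|T|)%N.
Proof.
have h0 : (0 < k)%N by apply: leq_trans hk.
have h1 : (1 < k)%N by [].
pose i0 := Ordinal h0; pose i1 := Ordinal h1.
have a0 : (0 < n i0)%N by apply: leq_trans (hn i0).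
have a1 : (1 < n i0)%N by apply: (hn i0).
have b0 : (0 < n i1)%N by apply: leq_trans (hn i1).
pose x := Tagged (fun i => 'I_(n i)) (Ordinal a0).
pose y := Tagged (fun i => 'I_(n i)) (Ordinal a1).
pose z := Tagged (fun i => 'I_(n i)) (Ordinal b0).
apply: leq_trans (max_card (mem [set x; y; z])).
rewrite -setUA cardsU1 cards2.
have xy : x != y by apply/eqP => /(congr1 (fun t => tagged_as x t)); rewrite !tagged_asE.
have yz : y != z by apply/eqP => /(congr1 (fun t : T => tag t)).
have xz : x != z by apply/eqP => /(congr1 (fun t : T => tag t)).
by rewrite yz !inE negb_or xy xz.
Qed.

Lemma w1 (u v : T) : walkn e 1 u v = (tag u != tag v).
Proof.
rewrite /= /kpart_adj; apply/existsP/idP => [[w /andP[H /eqP<-]]|H]; first exact H.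
by exists v; rewrite H eqxx.
Qed.

Lemma w2 (u v : T) : tag u == tag v -> walkn e 2 u v.
Proof.
move=> /eqP H; have [j Hj] := other_part (tag u).
have a0 : (0 < n j)%N by apply: leq_trans (hn j).
apply/existsP; exists (Tagged (fun i => 'I_(n i)) (Ordinal a0)).
rewrite /kpart_adj /= eq_sym Hj /=.
by apply/existsP; exists v; rewrite eqxx andbT -H.
Qed.

Lemma gdistE (u v : T) : gdist e u v = gd u v.
Proof.
rewrite /gdist /gd; move: (card3); case: #|T| => [|[|[|N]]] //= _.
case: eqP => // Huv.
have := w1 u v; rewrite /= => ->.
case: (eqVneq (tag u) (tag v)) => Ht //=.
by have := w2 (introT eqP Ht); rewrite /= => ->.
Qed.

Lemma resolves2 (x u v : T) : resolves e x [set u; v] = (gd x u != gd x v).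
Proof.
apply/existsP/idP => [[a /andP[Ha /existsP[b /andP[Hb]]]]|H].
  rewrite !gdistE; move: Ha Hb; rewrite !inE.
  by case/orP=> /eqP-> ; case/orP=> /eqP-> //; rewrite ?eqxx // eq_sym.
exists u; rewrite !inE eqxx /=; apply/existsP; exists v.
by rewrite !inE eqxx orbT !gdistE.
Qed.

Lemma Vp_sum (g : {set T} -> rat) :
  \sum_(P in Vp T) g P = 2^-1 * \sum_(u : T) \sum_(v : T | v != u) g [set u; v].
Proof.
rewrite (pair_big_dep predT (fun u v => v != u) (fun u v => g [set u; v])) /=.
rewrite (partition_big (fun p : T * T => [set p.1; p.2]) (mem (Vp T))) /=; last first.
  by move=> [u v] /= H; rewrite inE cards2; move: H; rewrite eq_sym => ->.
rewrite mulr_sumr; apply: eq_bigr => P; rewrite inE => /cards2P [a [b [ab ->]]].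
have E : forall p : T * T, (p.2 != p.1) && ([set p.1; p.2] == [set a; b])
     = (p \in [set (a, b); (b, a)]).
  move=> [u v] /=; rewrite !inE; apply/idP/idP.
    case/andP=> vu /eqP E.
    have hu : u \in [set a; b] by rewrite -E set21.
    have hv : v \in [set a; b] by rewrite -E set22.
    move: hu hv vu; rewrite !inE.
    by case/orP=> /eqP->; case/orP=> /eqP->; rewrite ?eqxx //= ?orbT.
  case/orP=> /eqP [-> ->]; first by rewrite eq_sym ab eqxx.
  by rewrite ab setUC eqxx.
under eq_bigl => p do rewrite E.
rewrite (eq_bigr (fun _ => g [set a; b])); last by move=> p /set2P [->|->] //=; rewrite setUC.
rewrite sumr_const cards2.
have -> : (a, b) != (b, a) by rewrite xpair_eqE negb_and ab.
by rewrite (_ : true.+1 = 2)%N // mulr2n; lra.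
Qed.

Lemma cardR (A : {set T}) : (#|A|%:R : rat) = \sum_(x : T) (x \in A)%:R.
Proof.
rewrite -sum1_card natr_sum big_mkcond /=; apply: eq_bigr => x _.
by case: (x \in A).
Qed.

Lemma sum_eq1 (u : T) : \sum_(x : T) ((x == u)%:R : rat) = 1.
Proof.
rewrite (bigD1 u) //= eqxx big1 ?addr0 // => y /negbTE ->; by [].
Qed.

Lemma sum_tag (i : 'I_k) : \sum_(x : T) ((tag x == i)%:R : rat) = (n i)%:R.
Proof.
rewrite (sig_sum (fun t => (t == i)%:R)) (bigD1 i) //= eqxx mulr1 big1 ?addr0 //.
by move=> t /negbTE ->; rewrite mulr0.
Qed.

Lemma gd_pt (x u v : T) : u != v ->
  ((gd x u != gd x v)%:R : rat) =
  if tag u == tag v then (x == u)%:R + (x == v)%:R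
  else (tag x == tag u)%:R + (tag x == tag v)%:R.
Proof.
move=> uv; rewrite /gd.
case: (eqVneq x u) => [->|xu].
  by rewrite !eqxx (negbTE uv); case: ifP => _ /=; rewrite ?addr0.
case: (eqVneq x v) => [->|xv].
  by rewrite !eqxx [tag v == _]eq_sym; case: ifP => _ /=; rewrite ?add0r.
move: xu xv uv; case: x => [ix ax]; case: u => [iu au]; case: v => [iv av] /= _ _ _.
case: (eqVneq iu iv) => [<-|tuv]; first by case: ifP.
case: (eqVneq ix iu) => [txu|txu]; first by subst ix; rewrite eq_sym (negbTE tuv).
by case: (ix == iv).
Qed.

Definition rcR (u v : T) : rat :=
  if tag u == tag v then 2 else (n (tag u))%:R + (n (tag v))%:R.

Lemma card_Rpair (u v : T) : u != v -> (#|Rpair e [set u; v]|%:R : rat) = rcR u v.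
Proof.
move=> uv; rewrite cardR /rcR.
under eq_bigr => x _ do rewrite inE resolves2 gd_pt //.
case: ifP => _; rewrite big_split /= ?sum_eq1 ?sum_tag //.
Qed.

Lemma Lsum (w : T) (Phi : nat -> 'I_k -> rat) :
  \sum_(x : T) Phi (gd w x) (tag x) =
  Phi 0%N (tag w) - Phi 2%N (tag w) +
  \sum_(t < k) (n t)%:R * Phi (if t == tag w then 2 else 1)%N t.
Proof.
pose Psi := fun x : T => Phi (if tag x == tag w then 2 else 1)%N (tag x).
have E1 : \sum_(x : T) Psi x = \sum_(t < k) (n t)%:R * Phi (if t == tag w then 2 else 1)%N t.
  exact: (sig_sum (fun t => Phi (if t == tag w then 2 else 1)%N t)).
rewrite (bigD1 w) //= {1}/gd eqxx -E1 (bigD1 w (P := predT)) //= /Psi eqxx.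
rewrite (eq_bigr (fun x => Psi x)); last first.
  by move=> x xw; rewrite /gd /Psi eq_sym (negbTE xw) eq_sym.
rewrite /Psi; ring.
Qed.

Lemma Dsum (w : T) (f : nat -> nat -> 'I_k -> 'I_k -> rat)
  (hf : forall a s t, f a a s t = 0) :
  \sum_(u : T) \sum_(v : T) f (gd w u) (gd w v) (tag u) (tag v) =
  ((n (tag w))%:R - 1) * (f 0%N 2%N (tag w) (tag w) + f 2%N 0%N (tag w) (tag w))
  + \sum_(t < k | t != tag w) (n t)%:R * f 0%N 1%N (tag w) t
  + ((n (tag w))%:R - 1) * \sum_(t < k | t != tag w) (n t)%:R * f 2%N 1%N (tag w) t
  + \sum_(s < k | s != tag w) (n s)%:R * (f 1%N 0%N s (tag w) + ((n (tag w))%:R - 1) * f 1%N 2%N s (tag w)).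
Proof.
under eq_bigr => u _ do rewrite (Lsum w (fun b t => f (gd w u) b (tag u) t)).
rewrite (Lsum w (fun a s => f a 0%N s (tag w) - f a 2%N s (tag w) +
   \sum_(t < k) (n t)%:R * f a (if t == tag w then 2 else 1)%N s t)) /=.
set i := tag w.
have A : forall a s, \sum_(t < k) (n t)%:R * f a (if t == i then 2 else 1)%N s t =
   (n i)%:R * f a 2%N s i + \sum_(t < k | t != i) (n t)%:R * f a 1%N s t.
  move=> a s; rewrite (bigD1 i) //= eqxx; congr (_ + _).
  by apply: eq_bigr => t /negbTE ->.
rewrite !A !hf [\sum_(t < k) _](bigD1 i) //= eqxx A !hf.
rewrite [\sum_(t < k | t != i) (n t)%:R * (_ - _ + _)](eq_bigr (fun s => (n s)%:R * (f 1%N 0%N s i + ((n i)%:R - 1) * f 1%N 2%N s i))); last first.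
  move=> s sI; rewrite (negbTE sI) A big1 ?addr0; last by move=> t _; rewrite hf mulr0.
  ring.
ring.
Qed.

Lemma drop_neq (F : T -> T -> rat) : (forall u, F u u = 0) ->
  \sum_(u : T) \sum_(v : T | v != u) F u v = \sum_(u : T) \sum_(v : T) F u v.
Proof.
move=> H; apply: eq_bigr => u _.
by rewrite [in RHS](bigD1 u) //= H add0r.
Qed.

Definition Ssum (i : 'I_k) : rat := \sum_(t < k | t != i) (n t)%:R.
Definition Qsum (i : 'I_k) : rat := \sum_(t < k | t != i) (n t)%:R / ((n i)%:R + (n t)%:R).

Lemma C_eq (w : T) :
  \sum_(u : T) \sum_(v : T | v != u) ((gd w u != gd w v)%:R : rat) =
  2 * (((n (tag w))%:R - 1) + (n (tag w))%:R * Ssum (tag w)).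
Proof.
rewrite drop_neq; last by move=> u; rewrite eqxx.
rewrite (Dsum w (f := fun a b _ _ => (a != b)%:R)) /=; last by move=> a _ _; rewrite eqxx.
rewrite /Ssum.
under [X in _ + X + _ + _ = _]eq_bigr => t _ do rewrite mulr1.
under [X in _ + _ + _ * X + _ = _]eq_bigr => t _ do rewrite mulr1.
under [X in _ + _ + _ + X = _]eq_bigr => t _ do rewrite mulr1.
rewrite -mulr_suml; ring.
Qed.

Lemma D_eq (w : T) :
  \sum_(u : T) \sum_(v : T | v != u)
     (if gd w u != gd w v then (rcR u v)^-1 else 0) =
  2 * (((n (tag w))%:R - 1) / 2 + (n (tag w))%:R * Qsum (tag w)).
Proof.
rewrite drop_neq; last by move=> u; rewrite eqxx.
rewrite /rcR (Dsum w (f := fun a b s t =>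
   if a != b then (if s == t then 2 else (n s)%:R + (n t)%:R)^-1 else 0)) /=;
  last by move=> a s t; rewrite eqxx.
rewrite eqxx /Qsum.
set i := tag w.
under [X in _ + X + _ + _ = _]eq_bigr => t ti do rewrite eq_sym (negbTE ti).
under [X in _ + _ + _ * X + _ = _]eq_bigr => t ti do rewrite eq_sym (negbTE ti).
rewrite [X in _ + _ + _ + X = _](eq_bigr (fun t => (n i)%:R * ((n t)%:R / ((n i)%:R + (n t)%:R)))); last first.
  by move=> s si; rewrite (negbTE si) (addrC (n s)%:R); ring.
rewrite -mulr_sumr; ring.
Qed.

Lemma avg_eq (w : T) : avg_rshare e w =
  (2^-1 * (2 * (((n (tag w))%:R - 1) + (n (tag w))%:R * Ssum (tag w))))^-1 *
  (2^-1 * (2 * (((n (tag w))%:R - 1) / 2 + (n (tag w))%:R * Qsum (tag w)))).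
Proof.
rewrite /avg_rshare -C_eq -D_eq; congr (_^-1 * _).
  rewrite -sum1_card natr_sum big_mkcond.
  rewrite (eq_bigr (fun P => if P \in Vp T then (resolves e w P)%:R else 0)); last first.
    by move=> P _; rewrite /Rvert inE; case: (P \in Vp T); case: (resolves e w P).
  rewrite -big_mkcond Vp_sum; congr (_ * _); apply: eq_bigr => u _.
  by apply: eq_bigr => v _; rewrite resolves2.
rewrite big_mkcond.
rewrite (eq_bigr (fun P => if P \in Vp T then rshare e w P else 0)); last first.
  by move=> P _; rewrite /Rvert inE /rshare; case: (P \in Vp T); case: (resolves e w P).
rewrite -big_mkcond Vp_sum; congr (_ * _); apply: eq_bigr => u _.
apply: eq_bigr => v vu; rewrite /rshare resolves2; case: ifP => // _.
by rewrite card_Rpair // eq_sym.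
Qed.
End KP.

Theorem theorem3p10 (k : nat) (n : 'I_k -> nat)
  (hk : (2 <= k)%N) (hn : forall i, (2 <= n i)%N) :
  RTI (kpart_adj n) =
  \sum_(i < k) (n i)%:R *
     (((n i)%:R - 1) / (n i)%:R + \sum_(t < k | t != i) (n t)%:R)^-1 *
     (((n i)%:R - 1) / (2 * (n i)%:R) + \sum_(t < k | t != i) (n t)%:R / ((n i)%:R + (n t)%:R)) :> rat.
Proof.
rewrite /RTI.
under eq_bigr => w _ do rewrite (avg_eq hk hn w).
rewrite (@sig_sum _ n (fun i => (2^-1 * (2 * (((n i)%:R - 1) + (n i)%:R * Ssum n i)))^-1 *
  (2^-1 * (2 * (((n i)%:R - 1) / 2 + (n i)%:R * Qsum n i))))).
apply: eq_bigr => i _; rewrite -/(Ssum n i) -/(Qsum n i).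
have h2 : (2 <= (n i)%:R :> rat) by rewrite ler_nat.
have hS : 0 <= Ssum n i by apply: sumr_ge0 => t _; apply: ler0n.
have hd : ((n i)%:R - 1) + (n i)%:R * Ssum n i != 0 :> rat.
  rewrite lt0r_neq0 //; nra.
have hn0 : (n i)%:R != 0 :> rat by rewrite lt0r_neq0 //; lra.
by field; rewrite hn0 mulrC hd.
Qed.
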